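(* Let $G$ be a digraph and $\mathbb F$ a field, and for sheaves $\mathcal F$ of finite-dimensional $\mathbb F$-vector spaces on $G$ put $\alpha_1(\mathcal F)={\rm m.e.}(\mathcal F)$ and $\alpha_0(\mathcal F)=\chi(\mathcal F)+{\rm m.e.}(\mathcal F)$. Then $\alpha_0,\alpha_1$ take non-negative values; $\alpha_i(\mathcal F_1\oplus\mathcal F_2)=\alpha_i(\mathcal F_1)+\alpha_i(\mathcal F_2)$ for $i=0,1$; and for every short exact sequence $0\to\mathcal F_1\to\mathcal F_2\to\mathcal F_3\to0$ of sheaves on $G$ the sequence $$0,\ \alpha_1(\mathcal F_1),\ \alpha_1(\mathcal F_2),\ \alpha_1(\mathcal F_3),\ \alpha_0(\mathcal F_1),\ \alpha_0(\mathcal F_2),\ \alpha_0(\mathcal F_3),\ 0$$ is triangular, i.e. each term other than the first and last is at most the sum of its two neighbours. (That is, the maximum excess is a first quasi-Betti number.)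
   Context: Digraphs (finite, multiple edges and loops allowed) and sheaves $\mathcal F$ on them: finite-dimensional $\mathbb F$-vector spaces $\mathcal F(P)$, $P\in V_G\sqcup E_G$, with linear maps $\mathcal F(t,e)\colon\mathcal F(e)\to\mathcal F(t_Ge)$, $\mathcal F(h,e)\colon\mathcal F(e)\to\mathcal F(h_Ge)$. $\mathcal F(V)=\bigoplus_v\mathcal F(v)$, $\mathcal F(E)=\bigoplus_e\mathcal F(e)$, $\chi(\mathcal F)=\dim\mathcal F(V)-\dim\mathcal F(E)$; $d_h,d_t\colon\mathcal F(E)\to\mathcal F(V)$ send the summand $\mathcal F(e)$ into $\mathcal F(h_Ge)$, resp. $\mathcal F(t_Ge)$, via the restriction maps. For a subspace $U\subset\mathcal F(V)$, $\Gamma_{\rm ht}(U)=\bigoplus_{e}\{w\in\mathcal F(e):d_hw\in U,\ d_tw\in U\}$, ${\rm excess}(\mathcal F,U)=\dim\Gamma_{\rm ht}(U)-\dim U$, ${\rm m.e.}(\mathcal F)=\max_U{\rm excess}(\mathcal F,U)$. A morphism of sheaves $\alpha\colon\mathcal F\to\mathcal G$ is a family of linear maps $\alpha_P\colon\mathcal F(P)\to\mathcal G(P)$ with $\mathcal G(t,e)\alpha_e=\alpha_{te}\mathcal F(t,e)$ and $\mathcal G(h,e)\alpha_e=\alpha_{he}\mathcal F(h,e)$; direct sums are taken valuewise, and a sequence of sheaves is exact iff it is exact at every $P\in V_G\sqcup E_G$. *)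

(* Defs.v *)
From HB Require Import structures.
From mathcomp Require Import all_boot all_order all_algebra.
From Stdlib Require Import ClassicalEpsilon.
Set Implicit Arguments. Unset Strict Implicit. Unset Printing Implicit Defensive.
Import Order.TTheory GRing.Theory Num.Theory.
Local Open Scope ring_scope.

Record digraph := Digraph {
  nV : nat; nE : nat;
  tailG : 'I_nE -> 'I_nV;
  headG : 'I_nE -> 'I_nV }.

(* A sheaf of finite-dimensional F-vector spaces on G.
   F(P) = 'rV[F]_(dim P); a linear map F(e) -> F(w) is a matrix
   'M_(dim e, dim w), acting on row vectors: x |-> x *m M. *)
Record sheaf (F : fieldType) (G : digraph) := Sheaf {
  dimV : 'I_(nV G) -> nat;
  dimE : 'I_(nE G) -> nat;
  resT : forall e, 'M[F]_(dimE e, dimV (tailG e));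
  resH : forall e, 'M[F]_(dimE e, dimV (headG e)) }.

Section SheafDefs.
Variables (F : fieldType) (G : digraph).
Implicit Types S : sheaf F G.

Definition totV S : nat := (\sum_(v < nV G) dimV S v)%N.
Definition totE S : nat := (\sum_(e < nE G) dimE S e)%N.

Definition chi S : int := (totV S)%:Z - (totE S)%:Z.

(* The matrix of F(e) -> F(V) = (+)_v F(v), sending F(e) into the summand
   F(w) via R : F(e) -> F(w). *)
Definition into_FV S (e : 'I_(nE G)) (w : 'I_(nV G))
    (R : 'M[F]_(dimE S e, dimV S w)) : 'M[F]_(dimE S e, totV S) :=
  mxrow (fun v : 'I_(nV G) =>
    (if w == v then conform_mx 0 R else 0 : 'M[F]_(dimE S e, dimV S v))).

(* restrictions of d_h, d_t to the summand F(e) *)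
Definition dh_e S e : 'Hom('rV[F]_(dimE S e), 'rV[F]_(totV S)) :=
  linfun (fun x : 'rV[F]_(dimE S e) => x *m into_FV (resH S e)).
Definition dt_e S e : 'Hom('rV[F]_(dimE S e), 'rV[F]_(totV S)) :=
  linfun (fun x : 'rV[F]_(dimE S e) => x *m into_FV (resT S e)).

(* e-component of Gamma_ht(U): {w in F(e) : d_h w in U, d_t w in U} *)
Definition Gamma_e S (U : {vspace 'rV[F]_(totV S)}) e
    : {vspace 'rV[F]_(dimE S e)} :=
  (dh_e S e @^-1: U :&: dt_e S e @^-1: U)%VS.

Definition dimGamma S (U : {vspace 'rV[F]_(totV S)}) : nat :=
  (\sum_(e < nE G) \dim (Gamma_e U e))%N.

Definition excess S (U : {vspace 'rV[F]_(totV S)}) : int :=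
  (dimGamma U)%:Z - (\dim U)%:Z.

Definition cbool (P : Prop) : bool :=
  if excluded_middle_informative P then true else false.

(* maximum excess: max_U excess(F,U).  Every excess lies in
   [-dim F(V), dim F(E)], so we maximise k = excess + dim F(V) over
   k < dim F(E) + dim F(V) + 1 (the set is nonempty: U = 0). *)
Definition max_excess S : int :=
  (\max_(k < (totE S + totV S).+1 |
           cbool (exists U : {vspace 'rV[F]_(totV S)},
                    excess U = k%:Z - (totV S)%:Z)) k)%:Z - (totV S)%:Z.

Definition alpha1 S : int := max_excess S.
Definition alpha0 S : int := chi S + max_excess S.

Definition dsum S1 S2 : sheaf F G :=
  @Sheaf F G (fun v => dimV S1 v + dimV S2 v)%N
    (fun e => dimE S1 e + dimE S2 e)%N
    (fun e => block_mx (resT S1 e) 0 0 (resT S2 e))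
    (fun e => block_mx (resH S1 e) 0 0 (resH S2 e)).

Record sh_maps S1 S2 := ShMaps {
  mapV : forall v, 'M[F]_(dimV S1 v, dimV S2 v);
  mapE : forall e, 'M[F]_(dimE S1 e, dimE S2 e) }.

(* morphism condition: G(t,e) alpha_e = alpha_{te} F(t,e), same for h
   (row-vector convention: composition f then g is A *m B) *)
Definition is_morphism S1 S2 (a : sh_maps S1 S2) : Prop :=
  forall e, mapE a e *m resT S2 e = resT S1 e *m mapV a (tailG e) /\
            mapE a e *m resH S2 e = resH S1 e *m mapV a (headG e).

End SheafDefs.

Definition short_exact (F : fieldType) m n p
    (A : 'M[F]_(m, n)) (B : 'M[F]_(n, p)) : bool :=
  [&& row_free A, (A == kermx B)%MS & row_full B].

Definition short_exact_seq (F : fieldType) (G : digraph)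
    (S1 S2 S3 : sheaf F G) (a : sh_maps S1 S2) (b : sh_maps S2 S3) : Prop :=
  [/\ is_morphism a, is_morphism b,
      (forall v, short_exact (mapV a v) (mapV b v)) &
      (forall e, short_exact (mapE a e) (mapE b e))].

Definition triangular (s : seq int) : Prop :=
  forall i : nat, (0 < i)%N -> (i.+1 < size s)%N ->
    s`_i <= s`_i.-1 + s`_i.+1.

(* Main.v *)
Require Import Defs.
From HB Require Import structures.
From mathcomp Require Import all_boot all_order all_algebra.
From mathcomp Require Import zify.
From Stdlib Require Import ClassicalEpsilon.
Import Order.TTheory GRing.Theory Num.Theory.
Set Implicit Arguments. Unset Strict Implicit. Unset Printing Implicit Defensive.
Local Open Scope ring_scope.

Section Abs.
Variables (K : fieldType) (T1 T2 T3 : vectType K).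

Definition ex_el (f : 'Hom(T1, T2)) (g : 'Hom(T2, T3)) : Prop :=
  [/\ injective f, forall y, g (f y) = 0,
      forall x, g x = 0 -> exists y, x = f y & forall z, exists x, z = g x].

Lemma dim_inj (f : 'Hom(T1, T2)) U : injective f -> \dim (f @: U)%VS = \dim U.
Proof.
move=> /lker0P /eqP fK; apply: limg_dim_eq; by rewrite fK capv0.
Qed.

Lemma dim_img_le (f : 'Hom(T1, T2)) U : (\dim (f @: U)%VS <= \dim U)%N.
Proof. by rewrite -(limg_ker_dim f U) leq_addl. Qed.

Lemma ker_img f g : ex_el f g -> lker g = limg f.
Proof.
case=> _ gf ker _; apply/vspaceP => x; rewrite memv_ker.
apply/eqP/memv_imgP => [/ker [y ->]|[y _ ->]]; last exact: gf.
by exists y; rewrite ?memvf.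
Qed.

Lemma limg_full f g : ex_el f g -> limg g = fullv.
Proof.
case=> _ _ _ sur; apply/vspaceP => z; rewrite memvf.
by have [x ->] := sur z; rewrite memv_img ?memvf.
Qed.

Lemma dimD2 f g (W : {vspace T2}) : ex_el f g ->
  \dim W = (\dim (f @^-1: W)%VS + \dim (g @: W)%VS)%N.
Proof.
move=> ex; rewrite -(limg_ker_dim g W) (ker_img ex).
congr (_ + _)%N; rewrite -(@dim_inj f (f @^-1: W)%VS); last by case: ex.
by rewrite -lpreim_cap_limg lpreimK ?capvSr.
Qed.

Lemma dimD3 f g (W : {vspace T3}) : ex_el f g ->
  \dim (g @^-1: W)%VS = (\dim (fullv : {vspace T1}) + \dim W)%N.
Proof.
move=> ex; rewrite (dimD2 _ ex) lpreimK; last by rewrite (limg_full ex) subvf.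
congr (_ + _)%N; congr (\dim _); apply/vspaceP => y; rewrite memvf.
case: ex => _ gf _ _.
by rewrite -!memv_preim gf mem0v.
Qed.

Lemma dimfull f g : ex_el f g ->
  \dim (fullv : {vspace T2}) = (\dim (fullv : {vspace T1}) + \dim (fullv : {vspace T3}))%N.
Proof.
move=> ex; have := dimD3 (fullv : {vspace T3}) ex.
suff -> : (g @^-1: fullv)%VS = fullv by [].
by apply/vspaceP => y; rewrite -memv_preim !memvf.
Qed.

End Abs.

Section TM.
Variables (R : fieldType) (n : nat) (p q : 'I_n -> nat)
  (A : forall v, 'M[R]_(p v, q v)).

Definition totmap (x : 'rV[R]_(\sum_(v < n) p v)) : 'rV[R]_(\sum_(v < n) q v) :=
  \mxrow_v (submxrow x v *m A v).

Lemma totmapK x v : submxrow (totmap x) v = submxrow x v *m A v.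
Proof. by rewrite /totmap mxrowK. Qed.

Fact totmap_semilinear : semilinear totmap.
Proof.
split=> [a x|x y]; apply/mxrowP => v; rewrite ?submxrowD !totmapK ?submxrowD ?mulmxDl //.
have -> : submxrow (a *: x) v = a *: submxrow x v.
  by apply/matrixP => i j; rewrite !mxE.
have -> : submxrow (a *: totmap x) v = a *: submxrow (totmap x) v.
  by apply/matrixP => i j; rewrite !mxE.
by rewrite totmapK scalemxAl.
Qed.

HB.instance Definition _ :=
  GRing.isSemilinear.Build R 'rV[R]_(\sum_(v < n) p v) 'rV[R]_(\sum_(v < n) q v) _ totmap
    totmap_semilinear.

Definition Tm : 'Hom('rV[R]_(\sum_(v < n) p v), 'rV[R]_(\sum_(v < n) q v)) := linfun totmap.

Lemma TmE x : Tm x = totmap x.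
Proof. by rewrite lfunE. Qed.

End TM.

Definition Em (R : fieldType) a b (M : 'M[R]_(a, b)) : 'Hom('rV[R]_a, 'rV[R]_b) :=
  linfun (mulmxr M).

Lemma EmE (R : fieldType) a b (M : 'M[R]_(a, b)) x : Em M x = x *m M.
Proof. by rewrite lfunE. Qed.

Definition mx_ex (R : fieldType) m n p (A : 'M[R]_(m, n)) (B : 'M[R]_(n, p)) : Prop :=
  [/\ A *m B = 0,
      exists P : 'M[R]_(n, m), A *m P = 1%:M /\ forall x : 'rV_n, x *m B = 0 -> x *m P *m A = x
    & exists Q : 'M[R]_(p, n), Q *m B = 1%:M].

Lemma short_mx_ex (R : fieldType) m n p (A : 'M[R]_(m, n)) (B : 'M[R]_(n, p)) :
  short_exact A B -> mx_ex A B.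
Proof.
case/and3P => /row_freeP [P AP] /andP [sAK sKA] /row_fullP [Q QB].
split; first by apply/sub_kermxP.
  exists P; split => // x /sub_kermxP xK.
  have /submxP [D ->] := submx_trans xK sKA.
  by rewrite -(mulmxA D A P) AP mulmx1.
by exists Q.
Qed.

Lemma mx_ex_el (R : fieldType) m n p (A : 'M[R]_(m, n)) (B : 'M[R]_(n, p)) :
  mx_ex A B -> ex_el (Em A) (Em B).
Proof.
case=> AB [P [AP ker]] [Q QB]; split.
- move=> x y; rewrite !EmE => e.
  by rewrite -[x]mulmx1 -AP mulmxA e -mulmxA AP mulmx1.
- by move=> y; rewrite !EmE -mulmxA AB mulmx0.
- move=> x; rewrite EmE => /ker e; exists (x *m P); by rewrite EmE e.
- by move=> z; exists (z *m Q); rewrite EmE -mulmxA QB mulmx1.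
Qed.

Lemma tot_ex_el (R : fieldType) n (p q r : 'I_n -> nat)
  (A : forall v, 'M[R]_(p v, q v)) (B : forall v, 'M[R]_(q v, r v)) :
  (forall v, mx_ex (A v) (B v)) -> ex_el (Tm A) (Tm B).
Proof.
move=> H.
have [P HP] := @fin_all_exists _ (fun v => 'M[R]_(q v, p v))
   (fun v P => A v *m P = 1%:M /\ forall x : 'rV_(q v), x *m B v = 0 -> x *m P *m A v = x)
   (fun v => let: And3 _ e _ := H v in e).
have [Q HQ] := @fin_all_exists _ (fun v => 'M[R]_(r v, q v))
   (fun v Q => Q *m B v = 1%:M) (fun v => let: And3 _ _ e := H v in e).
split.
- move=> x y; rewrite !TmE => e; apply/mxrowP => v.
  have := congr1 (fun z => submxrow z v) e; rewrite /= !totmapK => e2.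
  have [AP _] := HP v.
  by rewrite -[submxrow x v]mulmx1 -AP mulmxA e2 -mulmxA AP mulmx1.
- move=> y; rewrite !TmE; apply/mxrowP => v; rewrite !totmapK submxrow0.
  by case: (H v) => AB _ _; rewrite -mulmxA AB mulmx0.
- move=> x; rewrite TmE => e; exists (Tm P x); rewrite !TmE; apply/mxrowP => v.
  rewrite !totmapK; have [_ ker] := HP v; rewrite ker //.
  by have := congr1 (fun z => submxrow z v) e; rewrite /= totmapK submxrow0.
- move=> z; exists (Tm Q z); rewrite !TmE; apply/mxrowP => v.
  by rewrite !totmapK -mulmxA HQ mulmx1.
Qed.

Section Sh.
Variables (F : fieldType) (G : digraph).

Definition phiV (S1 S2 : sheaf F G) (a : sh_maps S1 S2) :
  'Hom('rV[F]_(totV S1), 'rV[F]_(totV S2)) := Tm (mapV a).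
Definition psiE (S1 S2 : sheaf F G) (a : sh_maps S1 S2) e :
  'Hom('rV[F]_(dimE S1 e), 'rV[F]_(dimE S2 e)) := Em (mapE a e).

Lemma into_compat (S1 S2 : sheaf F G) (a : sh_maps S1 S2) e w
   (R1 : 'M[F]_(dimE S1 e, dimV S1 w)) (R2 : 'M[F]_(dimE S2 e, dimV S2 w)) x :
  mapE a e *m R2 = R1 *m mapV a w ->
  (x *m mapE a e) *m into_FV R2 = totmap (mapV a) (x *m into_FV R1).
Proof.
move=> H; apply/mxrowP => v; rewrite totmapK /into_FV !mul_mxrow !mxrowK.
case: eqP => [ewv|_]; last by rewrite !mulmx0 mul0mx.
subst v; rewrite !conform_mx_id -!mulmxA H.
by rewrite mulmxA.
Qed.

Lemma compat (S1 S2 : sheaf F G) (a : sh_maps S1 S2) e x :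
  is_morphism a ->
  dh_e S2 e (psiE a e x) = phiV a (dh_e S1 e x) /\
  dt_e S2 e (psiE a e x) = phiV a (dt_e S1 e x).
Proof.
move=> /(_ e) [HT HH]; rewrite /phiV /psiE !EmE !TmE /dh_e /dt_e.
by split; apply: into_compat.
Qed.

Lemma pull (S1 S2 : sheaf F G) (a : sh_maps S1 S2) e (U : {vspace 'rV[F]_(totV S2)}) :
  is_morphism a ->
  Gamma_e (phiV a @^-1: U)%VS e = (psiE a e @^-1: Gamma_e U e)%VS.
Proof.
move=> Ha; apply/vspaceP => x; rewrite -memv_preim /Gamma_e !memv_cap.
have [ch ct] := @compat S1 S2 a e x Ha.
by rewrite -!memv_preim ch ct.
Qed.

Lemma push (S1 S2 : sheaf F G) (a : sh_maps S1 S2) e (U : {vspace 'rV[F]_(totV S1)}) :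
  is_morphism a ->
  (psiE a e @: Gamma_e U e <= Gamma_e (phiV a @: U)%VS e)%VS.
Proof.
move=> Ha; apply/subvP => _ /memv_imgP [x Hx ->].
move: Hx; rewrite /Gamma_e !memv_cap -!memv_preim => /andP [h t].
have [ch ct] := @compat S1 S2 a e x Ha.
by rewrite ch ct !memv_img.
Qed.

Lemma Gamma_mono (S : sheaf F G) (U U' : {vspace 'rV[F]_(totV S)}) e :
  (U <= U')%VS -> (Gamma_e U e <= Gamma_e U' e)%VS.
Proof. by move=> sU; rewrite /Gamma_e capvS ?lpreimS. Qed.

Lemma Gamma_full (S : sheaf F G) e :
  Gamma_e (fullv : {vspace 'rV[F]_(totV S)}) e = fullv.
Proof.
apply/vspaceP => x; rewrite /Gamma_e memv_cap -!memv_preim !memvf.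
by [].
Qed.

Lemma dimrV (n : nat) : \dim (fullv : {vspace 'rV[F]_n}) = n.
Proof. by rewrite dimvf dim_matrix mul1r. Qed.

End Sh.

Section ME.
Variables (F : fieldType) (G : digraph).

Lemma cboolP (P : Prop) : cbool P -> P.
Proof. by rewrite /cbool; case: excluded_middle_informative. Qed.

Lemma cboolI (P : Prop) : P -> cbool P.
Proof. by rewrite /cbool; case: excluded_middle_informative. Qed.

Lemma dimU_le (S : sheaf F G) (U : {vspace 'rV[F]_(totV S)}) : (\dim U <= totV S)%N.
Proof. by have := dimvS (subvf U); rewrite dimrV. Qed.

Lemma dimGamma_le (S : sheaf F G) (U : {vspace 'rV[F]_(totV S)}) : (dimGamma U <= totE S)%N.
Proof.
apply: leq_sum => e _; by have := dimvS (subvf (Gamma_e U e)); rewrite dimrV.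
Qed.

Lemma me_ge (S : sheaf F G) (U : {vspace 'rV[F]_(totV S)}) : excess U <= max_excess S.
Proof.
rewrite /max_excess.
have h1 := dimU_le U; have h2 := dimGamma_le U.
pose k := (dimGamma U + totV S - \dim U)%N.
have kl : (k < (totE S + totV S).+1)%N by rewrite /k; lia.
have Pk : cbool (exists U' : {vspace 'rV[F]_(totV S)}, excess U' = (nat_of_ord (Ordinal kl))%:Z - (totV S)%:Z).
  by apply: cboolI; exists U; rewrite /excess /=; rewrite /k; lia.
have := @leq_bigmax_cond _ (fun i : 'I_(totE S + totV S).+1 =>
   cbool (exists U' : {vspace 'rV[F]_(totV S)}, excess U' = (nat_of_ord i)%:Z - (totV S)%:Z))
   (fun i => nat_of_ord i) _ Pk.
rewrite /excess /= /k; lia.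
Qed.

Lemma me_att (S : sheaf F G) : exists U : {vspace 'rV[F]_(totV S)}, max_excess S = excess U.
Proof.
rewrite /max_excess.
have h1 := dimU_le (0%VS : {vspace 'rV[F]_(totV S)}).
have h2 := dimGamma_le (0%VS : {vspace 'rV[F]_(totV S)}).
pose k := (dimGamma (0%VS : {vspace 'rV[F]_(totV S)}) + totV S - \dim (0%VS : {vspace 'rV[F]_(totV S)}))%N.
have kl : (k < (totE S + totV S).+1)%N by rewrite /k; lia.
have Pk : cbool (exists U' : {vspace 'rV[F]_(totV S)}, excess U' = (nat_of_ord (Ordinal kl))%:Z - (totV S)%:Z).
  by apply: cboolI; exists 0%VS; rewrite /excess /=; rewrite /k; lia.
rewrite (bigop.bigmax_eq_arg (Ordinal kl) Pk).
case: arg_maxnP => //= i /cboolP [U eU] _.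
by exists U; rewrite eU.
Qed.

End ME.

Ltac gen_dims := repeat match goal with |- context [@dimv ?K ?T ?X] =>
  let y := fresh "y" in have [y ->] : exists z : nat, @dimv K T X = z by eexists
 | |- context [@dimGamma ?K ?T ?S ?X] =>
  let y := fresh "y" in have [y ->] : exists z : nat, @dimGamma K T S X = z by eexists end.

Section Main.
Variables (F : fieldType) (G : digraph).

Definition exseq (S1 S2 S3 : sheaf F G) (a : sh_maps S1 S2) (b : sh_maps S2 S3) :=
  [/\ is_morphism a, is_morphism b, ex_el (phiV a) (phiV b)
    & forall e, ex_el (psiE a e) (psiE b e)].

Lemma short_exseq (S1 S2 S3 : sheaf F G) (a : sh_maps S1 S2) (b : sh_maps S2 S3) :
  short_exact_seq a b -> exseq a b.
Proof.
case=> Ha Hb HV HE; split => //.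
  by apply: tot_ex_el => v; apply: short_mx_ex.
by move=> e; apply: mx_ex_el; apply: short_mx_ex.
Qed.

Lemma me_ge0 (S : sheaf F G) : 0 <= max_excess S.
Proof.
have := me_ge (0%VS : {vspace 'rV[F]_(totV S)}); rewrite /excess dimv0; gen_dims; lia.
Qed.

Lemma alpha0_ge0' (S : sheaf F G) : 0 <= chi S + max_excess S.
Proof.
have := me_ge (fullv : {vspace 'rV[F]_(totV S)}); rewrite /excess /chi dimrV.
have -> : dimGamma (fullv : {vspace 'rV[F]_(totV S)}) = totE S.
  by apply: eq_bigr => e _; rewrite Gamma_full dimrV.
gen_dims; lia.
Qed.

Lemma me_inj (S1 S2 : sheaf F G) (a : sh_maps S1 S2) :
  is_morphism a -> injective (phiV a) -> (forall e, injective (psiE a e)) ->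
  max_excess S1 <= max_excess S2.
Proof.
move=> Ha iV iE; have [U1 ->] := me_att S1.
have e2 := me_ge (phiV a @: U1)%VS.
have g : (dimGamma U1 <= dimGamma (phiV a @: U1)%VS)%N.
  apply: leq_sum => e _; rewrite -(@dim_inj _ _ _ _ (Gamma_e U1 e) (iE e)).
  by apply: dimvS; apply: push.
move: e2 g; rewrite /excess (@dim_inj _ _ _ _ U1 iV); gen_dims; lia.
Qed.

Lemma me_sub (S1 S2 S3 : sheaf F G) (a : sh_maps S1 S2) (b : sh_maps S2 S3) :
  exseq a b -> max_excess S2 <= max_excess S1 + max_excess S3.
Proof.
case=> Ha Hb exV exE; have [U ->] := me_att S2.
have e1 := me_ge (phiV a @^-1: U)%VS; have e3 := me_ge (phiV b @: U)%VS.
have d := dimD2 U exV.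
have g : (dimGamma U <= dimGamma (phiV a @^-1: U)%VS + dimGamma (phiV b @: U)%VS)%N.
  rewrite /dimGamma -big_split; apply: leq_sum => e _ /=.
  rewrite (dimD2 (Gamma_e U e) (exE e)) pull //; apply: leq_add => //.
  by apply: dimvS; apply: push.
move: e1 e3 g; rewrite /excess d; set x1 := dimGamma (phiV a @^-1: U)%VS; set x2 := dimGamma (phiV b @: U)%VS; set y1 := \dim (phiV a @^-1: U)%VS; set y2 := \dim (phiV b @: U)%VS; clearbody x1 x2 y1 y2; move: (dimGamma U) (max_excess S1) (max_excess S3) => G0 m1 m3.
have [z1 ->] : exists z : nat, y1 = z by eexists.
have [z2 ->] : exists z : nat, y2 = z by eexists.
gen_dims; lia.
Qed.

Lemma me_quo (S1 S2 S3 : sheaf F G) (a : sh_maps S1 S2) (b : sh_maps S2 S3) :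
  exseq a b -> max_excess S3 <= max_excess S2 + chi S1.
Proof.
case=> Ha Hb exV exE; have [U3 ->] := me_att S3.
have e2 := me_ge (phiV b @^-1: U3)%VS.
have d := dimD3 U3 exV; rewrite dimrV in d.
have g : dimGamma (phiV b @^-1: U3)%VS = (totE S1 + dimGamma U3)%N.
  rewrite /dimGamma /totE -big_split; apply: eq_bigr => e _ /=.
  by rewrite pull // (dimD3 _ (exE e)) dimrV.
move: e2; rewrite /excess /chi d g; gen_dims; lia.
Qed.

Lemma chi_add (S1 S2 S3 : sheaf F G) (a : sh_maps S1 S2) (b : sh_maps S2 S3) :
  exseq a b -> chi S2 = chi S1 + chi S3.
Proof.
case=> Ha Hb exV exE.
have hV := dimfull exV; rewrite !dimrV in hV.
have hE : totE S2 = (totE S1 + totE S3)%N.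
  rewrite /totE -big_split; apply: eq_bigr => e _ /=.
  by have := dimfull (exE e); rewrite !dimrV.
rewrite /chi hV hE; gen_dims; lia.
Qed.

Lemma me_split (S1 S2 S : sheaf F G) (a : sh_maps S1 S) (c : sh_maps S2 S) :
  is_morphism a -> is_morphism c ->
  (forall e, injective (psiE a e)) -> (forall e, injective (psiE c e)) ->
  (forall e, (limg (psiE a e) :&: limg (psiE c e) = 0)%VS) ->
  max_excess S1 + max_excess S2 <= max_excess S.
Proof.
move=> Ha Hc ia ic disj.
have [U1 ->] := me_att S1; have [U2 ->] := me_att S2.
pose U := (phiV a @: U1 + phiV c @: U2)%VS.
have eU := me_ge U.
have dU : (\dim U <= \dim U1 + \dim U2)%N.
  have := dimv_sum_cap (phiV a @: U1)%VS (phiV c @: U2)%VS.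
  have := dim_img_le (phiV a) U1; have := dim_img_le (phiV c) U2.
  rewrite /U; gen_dims; lia.
have g : (dimGamma U1 + dimGamma U2 <= dimGamma U)%N.
  rewrite /dimGamma -big_split; apply: leq_sum => e _ /=.
  rewrite -(@dim_inj _ _ _ _ (Gamma_e U1 e) (ia e)).
  rewrite -(@dim_inj _ _ _ _ (Gamma_e U2 e) (ic e)).
  rewrite -dimv_disjoint_sum; last first.
    apply/eqP; rewrite -subv0 -(disj e).
    by apply: capvS; apply: limgS; apply: subvf.
  apply: dimvS; rewrite subv_add; apply/andP; split.
    apply: subv_trans (push _ _ Ha) _; apply: Gamma_mono; exact: addvSl.
  apply: subv_trans (push _ _ Hc) _; apply: Gamma_mono; exact: addvSr.
move: eU; rewrite /excess; move: g dU; gen_dims; lia.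
Qed.

End Main.

Section DS.
Variables (F : fieldType) (G : digraph).

Definition inl_map (S1 S2 : sheaf F G) : sh_maps S1 (dsum S1 S2) :=
  @ShMaps F G S1 (dsum S1 S2)
    (fun v => row_mx (1%:M : 'M[F]_(dimV S1 v)) (0 : 'M[F]_(dimV S1 v, dimV S2 v)))
    (fun e => row_mx (1%:M : 'M[F]_(dimE S1 e)) (0 : 'M[F]_(dimE S1 e, dimE S2 e))).

Definition inr_map (S1 S2 : sheaf F G) : sh_maps S2 (dsum S1 S2) :=
  @ShMaps F G S2 (dsum S1 S2)
    (fun v => row_mx (0 : 'M[F]_(dimV S2 v, dimV S1 v)) (1%:M : 'M[F]_(dimV S2 v)))
    (fun e => row_mx (0 : 'M[F]_(dimE S2 e, dimE S1 e)) (1%:M : 'M[F]_(dimE S2 e))).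

Definition pr2_map (S1 S2 : sheaf F G) : sh_maps (dsum S1 S2) S2 :=
  @ShMaps F G (dsum S1 S2) S2
    (fun v => col_mx (0 : 'M[F]_(dimV S1 v, dimV S2 v)) (1%:M : 'M[F]_(dimV S2 v)))
    (fun e => col_mx (0 : 'M[F]_(dimE S1 e, dimE S2 e)) (1%:M : 'M[F]_(dimE S2 e))).

Lemma inl_morph (S1 S2 : sheaf F G) : is_morphism (inl_map S1 S2).
Proof.
move=> e /=; split;
by rewrite mul_row_block mul_mx_row !mul1mx !mul0mx !addr0 mulmx1 mulmx0.
Qed.

Lemma inr_morph (S1 S2 : sheaf F G) : is_morphism (inr_map S1 S2).
Proof.
move=> e /=; split;
by rewrite mul_row_block mul_mx_row !mul1mx !mul0mx !add0r mulmx1 mulmx0.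
Qed.

Lemma pr2_morph (S1 S2 : sheaf F G) : is_morphism (pr2_map S1 S2).
Proof.
move=> e /=; split;
by rewrite mul_block_col mul_col_mx !mulmx1 !mulmx0 !mul0mx !addr0 !add0r mul1mx.
Qed.

Lemma split_mx_ex m n :
  mx_ex (row_mx (1%:M : 'M[F]_m) (0 : 'M[F]_(m, n))) (col_mx (0 : 'M[F]_(m, n)) (1%:M : 'M[F]_n)).
Proof.
split.
- by rewrite mul_row_col mul1mx mul0mx addr0.
- exists (col_mx (1%:M : 'M[F]_m) (0 : 'M[F]_(n, m))); split.
    by rewrite mul_row_col mul1mx mul0mx addr0.
  move=> x; rewrite -[x]hsubmxK mul_row_col mulmx0 mulmx1 add0r => ->.
  by rewrite mul_row_col mulmx1 mulmx0 addr0 mul_mx_row mulmx1 mulmx0.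
- exists (row_mx (0 : 'M[F]_(n, m)) (1%:M : 'M[F]_n)).
  by rewrite mul_row_col mul0mx mul1mx add0r.
Qed.

Lemma dsum_exseq (S1 S2 : sheaf F G) : exseq (inl_map S1 S2) (pr2_map S1 S2).
Proof.
split; [exact: inl_morph | exact: pr2_morph | |].
  by apply: tot_ex_el => v; apply: split_mx_ex.
by move=> e; apply: mx_ex_el; apply: split_mx_ex.
Qed.

Lemma dinl_inj (S1 S2 : sheaf F G) e : injective (psiE (inl_map S1 S2) e).
Proof.
move=> x y; rewrite !EmE !mul_mx_row !mulmx1 => /eq_row_mx [] //.
Qed.

Lemma dinr_inj (S1 S2 : sheaf F G) e : injective (psiE (inr_map S1 S2) e).
Proof.
move=> x y; rewrite !EmE !mul_mx_row !mulmx1 => /eq_row_mx [] //.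
Qed.

Lemma ddisj (S1 S2 : sheaf F G) e :
  (limg (psiE (inl_map S1 S2) e) :&: limg (psiE (inr_map S1 S2) e) = 0)%VS.
Proof.
apply/eqP; rewrite -subv0; apply/subvP => x /memv_capP [/memv_imgP [y _ ->] /memv_imgP [z _]].
rewrite !EmE !mul_mx_row !mulmx0 !mulmx1 => /eq_row_mx [-> _].
by rewrite row_mx0 memv0.
Qed.

Lemma chi_dsum (S1 S2 : sheaf F G) : chi (dsum S1 S2) = chi S1 + chi S2.
Proof.
rewrite /chi /totV /totE /= !big_split /=; lia.
Qed.

End DS.
Unset Implicit Arguments.

Theorem theorem1p5 (F : fieldType) (G : digraph) :
  (forall S : sheaf F G, 0 <= alpha0 S /\ 0 <= alpha1 S) /\
  (forall S1 S2 : sheaf F G,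
     alpha0 (dsum S1 S2) = alpha0 S1 + alpha0 S2 /\
     alpha1 (dsum S1 S2) = alpha1 S1 + alpha1 S2) /\
  (forall (S1 S2 S3 : sheaf F G) (a : sh_maps S1 S2) (b : sh_maps S2 S3),
     short_exact_seq a b ->
     triangular [:: 0; alpha1 S1; alpha1 S2; alpha1 S3;
                    alpha0 S1; alpha0 S2; alpha0 S3; 0]).
Proof.
split; first by move=> S; split; [exact: alpha0_ge0' | exact: me_ge0].
split.
  move=> S1 S2.
  have le1 := me_sub (dsum_exseq S1 S2).
  have le2 := me_split (inl_morph S1 S2) (inr_morph S1 S2)
                (@dinl_inj _ _ S1 S2) (@dinr_inj _ _ S1 S2) (@ddisj _ _ S1 S2).
  have c := chi_dsum S1 S2.
  rewrite /alpha0 /alpha1 c; split; lia.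
move=> S1 S2 S3 a b /short_exseq ex.
have ex' := ex; case: ex' => Ha Hb [iV _ _ _] exE.
have l1 := me_inj Ha iV (fun e => let: And4 i _ _ _ := exE e in i).
have l2 := me_sub ex.
have l3 := me_quo ex.
have c := chi_add ex.
have n1 := me_ge0 S1; have n2 := me_ge0 S2; have n3 := me_ge0 S3.
have p1 := alpha0_ge0' S1; have p2 := alpha0_ge0' S2; have p3 := alpha0_ge0' S3.
rewrite /triangular /alpha0 /alpha1.
move=> [|[|[|[|[|[|[|i]]]]]]] //= _ _; lia.
Qed.
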